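(* Let $N\ge2$, $I_1,\dots,I_N,R,M$ be positive integers, $I=I_1\cdots I_N$. For a positive integer $b$ define \[ W_{ub}(b)=I+(N+1)\Big(\prod_{k=1}^N\Big\lceil\frac{I_k}{b}\Big\rceil\Big)bR,\quad W_{lb1}=\frac{NIR}{3^{2-1/N}M^{1-1/N}}-M,\quad W_{lb2}=I+\sum_{k=1}^N I_kR-2M . \] Suppose there are constants $\alpha,\beta,\gamma,\delta,\epsilon>0$ with $\alpha<1$, $\beta<\alpha^{1-1/N}$, $\gamma>1+1/N$, $\delta<1+R\sum_k I_k/I$, $\epsilon<3^{-(2-1/N)}$, such that \[ M\ge\Big(\frac{N\alpha^{1/N}}{1-\alpha}\Big)^{\frac{N}{N-1}},\qquad M\ge\Big(\frac{1}{\alpha^{1/N}-\beta^{1/(N-1)}}\Big)^N, \] \[ M\le\Big(\frac{(\frac{N}{N+1}\gamma)^{1/N}-1}{\alpha^{1/N}}\min_{k}I_k\Big)^N,\quad M\le\tfrac12\Big((1-\delta)I+\sum_k I_kR\Big),\quad M\le\Big(\big(3^{-(2-1/N)}-\epsilon\big)NIR\Big)^{\frac{N}{2N-1}} . \] Let $b=\lfloor(\alpha M)^{1/N}\rfloor$. Then $b\ge1$, $b^N+Nb\le M$, and \[ W_{ub}(b)\le\frac{\gamma}{\beta}\Big(I+\frac{NIR}{M^{1-1/N}}\Big)\le \frac{2\gamma}{\beta\min(\delta,\epsilon)}\max(W_{lb1},W_{lb2}), \] with $\max(W_{lb1},W_{lb2})>0$.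
   Context: $W_{ub}(b)$ is the communication cost of the blocked sequential MTTKRP algorithm with block size $b$ (valid when $b^N+Nb\le M$), while $W_{lb1}$ and $W_{lb2}$ are lower bounds on the loads and stores of any sequential MTTKRP algorithm with fast memory size $M$; the claim is a statement purely about these quantities. *)

(* Defs.v *)
From Stdlib Require Import Reals Lra Lia List.
Import ListNotations.
Open Scope R_scope.

(* Index set {1,...,N}; the dimensions are given by a function Is : nat -> nat,
   only the values Is 1, ..., Is N matter. *)
Definition prodI (f : nat -> nat) (N : nat) : nat :=
  fold_right Nat.mul 1%nat (map f (seq 1 N)).
Definition sumI (f : nat -> nat) (N : nat) : nat :=
  fold_right Nat.add 0%nat (map f (seq 1 N)).
Definition minI (f : nat -> nat) (N : nat) : nat :=
  fold_right Nat.min (f 1%nat) (map f (seq 1 N)).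

Definition ceil_div (a b : nat) : nat := ((a + b - 1) / b)%nat.

Definition floorN (x : R) : nat := Z.to_nat (Int_part x).

Definition Itot (Is : nat -> nat) (N : nat) : R := INR (prodI Is N).

Definition W_ub (N : nat) (Is : nat -> nat) (Rk b : nat) : R :=
  Itot Is N + INR (N + 1) * INR (prodI (fun k => ceil_div (Is k) b) N)
              * INR b * INR Rk.

Definition W_lb1 (N : nat) (Is : nat -> nat) (Rk M : nat) : R :=
  INR N * Itot Is N * INR Rk
    / (Rpower 3 (2 - 1 / INR N) * Rpower (INR M) (1 - 1 / INR N)) - INR M.

Definition W_lb2 (N : nat) (Is : nat -> nat) (Rk M : nat) : R :=
  Itot Is N + INR (sumI Is N) * INR Rk - 2 * INR M.

(* Main.v *)
Require Import Defs.
From Stdlib Require Import Reals Lra Lia List ZArith.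
Open Scope R_scope.

Definition rprod (g : nat -> R) (l : list nat) : R := fold_right Rmult 1 (map g l).

Lemma INR_prod (f : nat -> nat) l :
  INR (fold_right Nat.mul 1%nat (map f l)) = rprod (fun k => INR (f k)) l.
Proof. unfold rprod in *; induction l; simpl; [reflexivity|]. rewrite mult_INR, IHl. reflexivity. Qed.

Lemma rprod_mono (g h : nat -> R) l :
  (forall k, In k l -> 0 <= g k <= h k) -> 0 <= rprod g l <= rprod h l.
Proof.
  unfold rprod in *; induction l; intros H; simpl; [lra|].
  destruct IHl as [A B]. { intros k Hk; apply H; simpl; auto. }
  destruct (H a (or_introl eq_refl)). split.
  - apply Rmult_le_pos; lra.
  - apply Rmult_le_compat; lra.
Qed.

Lemma rprod_mulc (g : nat -> R) c l :
  rprod (fun k => g k * c) l = rprod g l * c ^ length l.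
Proof. unfold rprod in *; induction l; simpl; [ring|]. rewrite IHl. ring. Qed.

Lemma min_le (f : nat -> nat) a l k : In k l ->
  (fold_right Nat.min a (map f l) <= f k)%nat.
Proof.
  induction l; simpl; [tauto|]. intros [->|H]; [lia|]. specialize (IHl H). lia.
Qed.

Lemma min_ge (f : nat -> nat) a l c : (c <= a)%nat -> (forall k, In k l -> (c <= f k)%nat) ->
  (c <= fold_right Nat.min a (map f l))%nat.
Proof.
  induction l; simpl; intros; [lia|].
  assert (c <= f a0)%nat by auto. assert (c <= fold_right Nat.min a (map f l))%nat by auto. lia.
Qed.

Lemma Rpower_pos x y : 0 < Rpower x y.
Proof. unfold Rpower; apply exp_pos. Qed.

Lemma root_pow (n : nat) z : (n <> 0)%nat -> 0 < z -> Rpower (z ^ n) (1 / INR n) = z.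
Proof.
  intros Hn Hz. rewrite <- Rpower_pow by lra. rewrite Rpower_mult.
  replace (INR n * (1 / INR n)) with 1. apply Rpower_1; lra.
  field. apply not_0_INR; auto.
Qed.

Lemma pow_root (n : nat) z : (n <> 0)%nat -> 0 < z -> Rpower z (1 / INR n) ^ n = z.
Proof.
  intros Hn Hz. rewrite <- Rpower_pow by apply Rpower_pos. rewrite Rpower_mult.
  replace (1 / INR n * INR n) with 1. apply Rpower_1; lra.
  field. apply not_0_INR; auto.
Qed.

Lemma rprod_one l : rprod (fun _ => 1) l = 1.
Proof. unfold rprod; induction l; simpl; [|rewrite IHl]; ring. Qed.

Lemma Rpower_1base y : Rpower 1 y = 1.
Proof. unfold Rpower. rewrite ln_1, Rmult_0_r, exp_0. reflexivity. Qed.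

Theorem theorem4 (N : nat) (Is : nat -> nat) (Rk M : nat)
  (alpha beta gamma delta epsilon : R)
  (hN : (2 <= N)%nat)
  (hIs : forall k, (1 <= k <= N)%nat -> (0 < Is k)%nat)
  (hR : (0 < Rk)%nat) (hM : (0 < M)%nat)
  (ha0 : 0 < alpha) (hb0 : 0 < beta) (hg0 : 0 < gamma)
  (hd0 : 0 < delta) (he0 : 0 < epsilon)
  (ha1 : alpha < 1)
  (hb1 : beta < Rpower alpha (1 - 1 / INR N))
  (hg1 : gamma > 1 + 1 / INR N)
  (hd1 : delta < 1 + INR Rk * INR (sumI Is N) / Itot Is N)
  (he1 : epsilon < Rpower 3 (- (2 - 1 / INR N)))
  (hM1 : INR M >= Rpower (INR N * Rpower alpha (1 / INR N) / (1 - alpha))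
                         (INR N / (INR N - 1)))
  (hM2 : INR M >= (1 / (Rpower alpha (1 / INR N)
                        - Rpower beta (1 / (INR N - 1)))) ^ N)
  (hM3 : INR M <= ((Rpower (INR N / (INR N + 1) * gamma) (1 / INR N) - 1)
                    / Rpower alpha (1 / INR N) * INR (minI Is N)) ^ N)
  (hM4 : INR M <= / 2 * ((1 - delta) * Itot Is N + INR (sumI Is N) * INR Rk))
  (hM5 : INR M <= Rpower ((Rpower 3 (- (2 - 1 / INR N)) - epsilon)
                           * INR N * Itot Is N * INR Rk)
                         (INR N / (2 * INR N - 1))) :
  let b := floorN (Rpower (alpha * INR M) (1 / INR N)) in
  (1 <= b)%nat /\
  (b ^ N + N * b <= M)%nat /\
  W_ub N Is Rk b
    <= gamma / beta * (Itot Is N + INR N * Itot Is N * INR Rk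
                                    / Rpower (INR M) (1 - 1 / INR N)) /\
  gamma / beta * (Itot Is N + INR N * Itot Is N * INR Rk
                                / Rpower (INR M) (1 - 1 / INR N))
    <= 2 * gamma / (beta * Rmin delta epsilon)
       * Rmax (W_lb1 N Is Rk M) (W_lb2 N Is Rk M) /\
  0 < Rmax (W_lb1 N Is Rk M) (W_lb2 N Is Rk M).
Proof.
  intros b.
  assert (Hbdef : b = floorN (Rpower (alpha * INR M) (1 / INR N))) by reflexivity.
  clearbody b.
  assert (HN0 : (N <> 0)%nat) by lia.
  set (n := INR N) in *.
  assert (hn : 2 <= n) by (unfold n; replace 2 with (INR 2) by (simpl; ring); apply le_INR; lia).
  set (I := Itot Is N) in *.
  assert (HI : 1 <= I).
  { unfold I, Itot, prodI. rewrite INR_prod. rewrite <- (rprod_one (seq 1 N)).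
    apply rprod_mono. intros k Hk. apply in_seq in Hk.
    specialize (hIs k ltac:(lia)). split; [lra|].
    replace 1 with (INR 1) by reflexivity. apply le_INR; lia. }
  set (MM := INR M) in *.
  assert (HMpos : 0 < MM) by (unfold MM; apply lt_0_INR; lia).
  set (RR := INR Rk) in *.
  assert (HRpos : 0 < RR) by (unfold RR; apply lt_0_INR; lia).
  set (a := Rpower alpha (1 / n)) in *.
  set (u := Rpower MM (1 / n)).
  set (bt := Rpower beta (1 / (n - 1))) in *.
  set (e := 1 - 1 / n) in *.
  assert (Hx : Rpower (alpha * MM) (1 / n) = a * u).
  { unfold a, u. rewrite Rpower_mult_distr; auto. }
  rewrite Hx in Hbdef.
  assert (HD : bt < a).
  { unfold bt, a.
    replace (1 / n) with (e * (1 / (n - 1))) by (unfold e; field; lra).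
    rewrite <- Rpower_mult. apply Rlt_Rpower_l.
    - apply Rdiv_lt_0_compat; lra.
    - split; auto. }
  assert (Hbt : 0 < bt) by apply Rpower_pos.
  assert (Hapos : 0 < a) by apply Rpower_pos.
  assert (Hupos : 0 < u) by apply Rpower_pos.
  assert (F1 : u * (a - bt) >= 1).
  { assert (P1 : 0 <= 1 / n) by (apply Rlt_le, Rdiv_lt_0_compat; lra).
    assert (P2 : 0 < (1 / (a - bt)) ^ N) by (apply pow_lt, Rdiv_lt_0_compat; lra).
    assert (H := Rle_Rpower_l _ _ (1 / n) P1 (conj P2 (Rge_le _ _ hM2))).
    rewrite root_pow in H by (auto; apply Rdiv_lt_0_compat; lra).
    fold u in H. apply Rle_ge.
    apply (Rmult_le_reg_r (/ (a - bt))). apply Rinv_0_lt_compat; lra.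
    replace (u * (a - bt) * / (a - bt)) with u by (field; lra). lra. }
  set (bb := INR b).
  assert (Hbb : a * u - 1 < bb <= a * u).
  { destruct (base_Int_part (a * u)) as [B1 B2].
    assert (0 <= Int_part (a * u))%Z.
    { apply le_IZR. simpl. nra. }
    unfold bb. rewrite Hbdef. unfold floorN. rewrite INR_IZR_INZ, Z2Nat.id by auto. lra. }
  set (y := bt * u).
  assert (Hy : y <= bb) by (unfold y; nra).
  assert (Hypos : 0 < y) by (unfold y; nra).
  assert (Hb1 : (1 <= b)%nat).
  { destruct b as [|b']; [|lia]. exfalso. unfold bb in Hy. simpl in Hy. lra. }
  assert (Hbbpos : 1 <= bb) by (unfold bb; replace 1 with (INR 1) by reflexivity; apply le_INR; lia).
  assert (F2 : beta * Rpower MM e <= bb ^ (N - 1)).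
  { apply Rle_trans with (y ^ (N - 1)).
    - unfold y. rewrite Rpow_mult_distr.
      rewrite <- !Rpower_pow by auto. unfold bt, u. rewrite !Rpower_mult.
      rewrite minus_INR by lia. fold n. simpl INR.
      replace (1 / (n - 1) * (n - 1)) with 1 by (field; lra).
      replace (1 / n * (n - 1)) with e by (unfold e; field; lra).
      rewrite Rpower_1 by auto. lra.
    - apply pow_incr. lra. }
  assert (F3 : bb ^ N <= alpha * MM).
  { rewrite <- (pow_root N (alpha * MM)) by (auto; nra). fold n. rewrite Hx.
    apply pow_incr. lra. }
  assert (F4 : n * (a * u) <= (1 - alpha) * MM).
  { set (K := n * a / (1 - alpha)).
    assert (HK : 0 < K) by (unfold K; apply Rdiv_lt_0_compat; nra).
    assert (H := Rle_Rpower_l _ _ e ltac:(unfold e; apply Rlt_le;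
       assert (0 < 1/n < 1) by (split; [apply Rdiv_lt_0_compat|apply (Rmult_lt_reg_r n); [|unfold Rdiv; rewrite Rmult_assoc, Rinv_l]]; lra); lra)
       (conj ltac:(apply Rpower_pos) (Rge_le _ _ hM1))).
    fold K in H. rewrite Rpower_mult in H.
    replace (n / (n - 1) * e) with 1 in H by (unfold e; field; lra).
    rewrite Rpower_1 in H by auto.
    assert (MM = Rpower MM e * u).
    { unfold u, e. rewrite <- Rpower_plus. replace (1 - 1 / n + 1 / n) with 1 by ring.
      rewrite Rpower_1; auto. }
    replace (n * (a * u)) with (K * (1 - alpha) * u) by (unfold K; field; lra).
    apply Rle_trans with ((1-alpha) * (Rpower MM e * u)); [|rewrite <- H0; lra].
    replace (K * (1 - alpha) * u) with ((1 - alpha) * (K * u)) by ring.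
    apply Rmult_le_compat_l; [lra|]. apply Rmult_le_compat_r; lra. }

  assert (Hbound : (b ^ N + N * b <= M)%nat).
  { apply INR_le. rewrite plus_INR, mult_INR, pow_INR. fold bb MM n.
    assert (n * bb <= n * (a * u)) by (apply Rmult_le_compat_l; lra). lra. }
  set (m := INR (minI Is N)) in *.
  assert (Hm : 1 <= m).
  { unfold m, minI. replace 1 with (INR 1) by reflexivity. apply le_INR.
    apply min_ge. apply hIs; lia. intros k Hk. apply in_seq in Hk. apply hIs; lia. }
  set (t := Rpower (n / (n + 1) * gamma) (1 / n)) in *.
  assert (Hz : 1 < n / (n + 1) * gamma).
  { apply (Rmult_lt_reg_r ((n+1)/n)). apply Rdiv_lt_0_compat; lra.
    replace (n / (n + 1) * gamma * ((n + 1) / n)) with gamma by (field; lra).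
    replace (1 + 1 / n) with ((n+1)/n) in hg1 by (field; lra). lra. }
  assert (Ht : 1 < t).
  { assert (H : Rpower 1 (1 / n) < t).
    { unfold t. apply Rlt_Rpower_l. apply Rdiv_lt_0_compat; lra. lra. }
    rewrite Rpower_1base in H. exact H. }
  assert (Hbm : bb <= (t - 1) * m).
  { assert (P1 : 0 <= 1 / n) by (apply Rlt_le, Rdiv_lt_0_compat; lra).
    assert (Pz : 0 < (t - 1) / a * m) by (apply Rmult_lt_0_compat; [apply Rdiv_lt_0_compat|]; lra).
    assert (H := Rle_Rpower_l _ _ (1 / n) P1 (conj HMpos hM3)).
    rewrite root_pow in H by auto. fold u in H.
    apply Rle_trans with (a * u); [lra|].
    replace ((t - 1) * m) with (a * ((t - 1) / a * m)) by (field; lra).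
    apply Rmult_le_compat_l; lra. }
  assert (F5 : (1 + bb / m) ^ N <= n / (n + 1) * gamma).
  { rewrite <- (pow_root N (n / (n + 1) * gamma)) by (auto; lra). fold n t.
    apply pow_incr. split. assert (0 <= bb / m) by (unfold Rdiv; apply Rmult_le_pos; [lra|apply Rlt_le, Rinv_0_lt_compat; lra]). lra.
    apply (Rmult_le_reg_r m); [lra|].
    replace ((1 + bb / m) * m) with (m + bb) by (field; lra). nra. }
  set (P := INR (prodI (fun k => ceil_div (Is k) b) N)).
  assert (F6 : P * bb ^ N <= I * (n / (n + 1) * gamma)).
  { apply Rle_trans with (I * (1 + bb / m) ^ N);
      [|apply Rmult_le_compat_l; lra].
    unfold P, I, Itot, prodI. rewrite !INR_prod.
    rewrite <- (length_seq N 1) at 2 4. rewrite <- !rprod_mulc.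
    apply rprod_mono. intros k Hk. apply in_seq in Hk.
    specialize (hIs k ltac:(lia)).
    assert (Hmk : m <= INR (Is k)).
    { unfold m, minI. apply le_INR. apply min_le. apply in_seq. lia. }
    split. apply Rmult_le_pos; [apply pos_INR|lra].
    assert (INR (ceil_div (Is k) b) * bb <= INR (Is k) + bb).
    { unfold bb, ceil_div. rewrite <- mult_INR, <- plus_INR. apply le_INR.
      rewrite Nat.mul_comm. assert (H := Nat.Div0.mul_div_le (Is k + b - 1) b). lia. }
    assert (bb <= INR (Is k) * (bb / m)).
    { apply (Rmult_le_reg_r m); [lra|].
      replace (INR (Is k) * (bb / m) * m) with (INR (Is k) * bb) by (field; lra). nra. }
    lra. }
  assert (HMe : 0 < Rpower MM e) by apply Rpower_pos.
  set (X := n * I * RR / Rpower MM e).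
  assert (Hbeta1 : beta < 1).
  { apply Rlt_le_trans with (Rpower alpha e); auto. rewrite <- (Rpower_1base e).
    apply Rlt_le, Rlt_Rpower_l. unfold e.
    assert (1 / n < 1). { apply (Rmult_lt_reg_r n); [lra|]. field_simplify; lra. } lra. lra. }
  assert (HX : 0 < X) by (unfold X; apply Rdiv_lt_0_compat; [apply Rmult_lt_0_compat; [|]; nra|auto]).
  assert (Hub : W_ub N Is Rk b <= gamma / beta * (I + X)).
  { unfold W_ub. fold I P bb RR. rewrite plus_INR. fold n. simpl (INR 1).
    assert (HbN : bb ^ N = bb * bb ^ (N - 1)).
    { replace N with (S (N - 1)) at 1 by lia. reflexivity. }
    assert (HP : 0 <= P) by apply pos_INR.
    assert (Q : P * bb * (beta * Rpower MM e) <= I * (n / (n + 1) * gamma)).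
    { apply Rle_trans with (P * bb ^ N); auto. rewrite HbN.
      replace (P * (bb * bb ^ (N - 1))) with (P * bb * bb ^ (N - 1)) by ring.
      apply Rmult_le_compat_l; [nra|auto]. }
    assert (Q2 : (n + 1) * P * bb * RR <= gamma / beta * X).
    { unfold X. apply (Rmult_le_reg_r (beta * Rpower MM e)). nra.
      replace ((n + 1) * P * bb * RR * (beta * Rpower MM e)) with
         ((n+1) * RR * (P * bb * (beta * Rpower MM e))) by ring.
      replace (gamma / beta * (n * I * RR / Rpower MM e) * (beta * Rpower MM e))
         with ((n+1) * RR * (I * (n / (n + 1) * gamma))) by (field; lra).
      apply Rmult_le_compat_l; [nra|auto]. }
    assert (1 <= gamma / beta).
    { apply (Rmult_le_reg_r beta); [lra|]. field_simplify; [|lra].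
      assert (1 < gamma) by (assert (0 < 1/n) by (apply Rdiv_lt_0_compat; lra); lra). lra. }
    assert (I <= gamma / beta * I) by nra. lra. }
  assert (HW2 : delta * I <= W_lb2 N Is Rk M).
  { unfold W_lb2. fold I MM RR. lra. }
  set (c3 := Rpower 3 (- (2 - 1 / n))) in *.
  assert (HW1 : epsilon * X <= W_lb1 N Is Rk M).
  { unfold W_lb1. fold I MM RR n e.
    assert (E : n * I * RR / (Rpower 3 (2 - 1 / n) * Rpower MM e) = c3 * X).
    { unfold c3, X. rewrite Rpower_Ropp. assert (0 < Rpower 3 (2 - 1/n)) by apply Rpower_pos.
      field. lra. }
    rewrite E.
    assert (Hc : 0 < (c3 - epsilon) * n * I * RR) by (apply Rmult_lt_0_compat; [|lra]; apply Rmult_lt_0_compat; nra).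
    assert (P1 : 0 <= (2 * n - 1) / n) by (apply Rlt_le, Rdiv_lt_0_compat; lra).
    assert (H := Rle_Rpower_l _ _ _ P1 (conj HMpos hM5)).
    rewrite Rpower_mult in H. replace (n / (2 * n - 1) * ((2 * n - 1) / n)) with 1 in H by (field; lra).
    rewrite Rpower_1 in H by auto.
    replace ((2 * n - 1) / n) with (1 + e) in H by (unfold e; field; lra).
    rewrite Rpower_plus, Rpower_1 in H by auto.
    assert (MM <= (c3 - epsilon) * X).
    { apply (Rmult_le_reg_r (Rpower MM e)); auto. unfold X.
      replace ((c3 - epsilon) * (n * I * RR / Rpower MM e) * Rpower MM e)
        with ((c3 - epsilon) * n * I * RR) by (field; lra). lra. }
    lra. }
  set (W1 := W_lb1 N Is Rk M) in *. set (W2 := W_lb2 N Is Rk M) in *.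
  assert (Hmx1 : W1 <= Rmax W1 W2) by apply Rmax_l.
  assert (Hmx2 : W2 <= Rmax W1 W2) by apply Rmax_r.
  assert (Hmu : 0 < Rmin delta epsilon /\ Rmin delta epsilon <= delta /\ Rmin delta epsilon <= epsilon).
  { unfold Rmin; destruct (Rle_dec delta epsilon); lra. }
  set (mu := Rmin delta epsilon) in *. set (Mx := Rmax W1 W2) in *.
  split; [auto|]. split; [auto|]. split; [auto|]. split; [|nra].
  assert (K : mu * (I + X) <= 2 * Mx) by nra.
  replace (2 * gamma / (beta * mu) * Mx) with (gamma / (beta * mu) * (2 * Mx)) by (field; lra).
  replace (gamma / beta * (I + X)) with (gamma / (beta * mu) * (mu * (I + X))) by (field; lra).
  apply Rmult_le_compat_l; auto. apply Rlt_le, Rdiv_lt_0_compat; nra.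
Qed.
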